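(* Let $p$ be an odd prime. Every nilpotent matrix $A\in\mathfrak{gl}_2(\mathbb{Z}_p)$ is multiplicatively-similar to precisely one of the matrices $\begin{pmatrix}0&0\\0&0\end{pmatrix}$ or $p^s\begin{pmatrix}0&0\\1&0\end{pmatrix}$, $s\in\mathbb{N}_0$. Let $\rho\in\mathbb{Z}_p^*$ be not a square modulo $p$. Then every non-nilpotent matrix $A\in\mathfrak{gl}_2(\mathbb{Z}_p)$ is multiplicatively-similar to precisely one matrix of the form $p^sA_0$, where $s\in\mathbb{N}_0$ and $A_0$ is one of the following core matrices: (1) $\begin{pmatrix}1&0\\0&1\end{pmatrix}$; (2) $\begin{pmatrix}1&0\\0&1\end{pmatrix}+p^r\begin{pmatrix}0&d\\1&0\end{pmatrix}$, where $r\in\mathbb{N}$ and $d\in\mathbb{Z}_p$; (3) $\begin{pmatrix}0&d\\1&p^r\end{pmatrix}$, where $r\in\mathbb{N}_0$ and $d\in\mathbb{Z}_p$; (4) $\begin{pmatrix}0&p^r\\1&0\end{pmatrix}$ or $\begin{pmatrix}0&\rho p^r\\1&0\end{pmatrix}$, where $r\in\mathbb{N}_0$.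
   Context: Two matrices $A,A'\in\mathfrak{gl}_2(\mathbb{Z}_p)$ are multiplicatively-similar if $A'=uB^{-1}AB$ for some $u\in\mathbb{Z}_p^*$ and $B\in\mathrm{GL}_2(\mathbb{Z}_p)$. $\mathbb{N}=\{1,2,\ldots\}$, $\mathbb{N}_0=\mathbb{N}\cup\{0\}$. *)

(* Defs.v *)
From HB Require Import structures.
From mathcomp Require Import all_boot all_order all_algebra.
From mathcomp Require Import boolp.
Set Implicit Arguments. Unset Strict Implicit. Unset Printing Implicit Defensive.
Import Order.TTheory GRing.Theory Num.Theory.
Local Open Scope ring_scope.

(* The ring Z_p of p-adic integers, as the inverse limit of the Z/p^n Z.    *)
(* An element is a sequence (x_n) of integers with x_n = x_{n+1} mod p^n,   *)
(* each x_n being reduced (0 <= x_n < p^n).  As for 'Z_p in zmodp, the      *)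
(* modulus is maxn p 2, so that this is a genuine ring for every p; for a   *)
(* prime p it is exactly p.                                                 *)

Section Padic.
Variable p : nat.

Definition zpmod (n : nat) : int := ((maxn p 2) ^ n)%N%:Z.

Definition zp_coherent (x : nat -> int) := forall n, x n = (x n.+1 %% zpmod n)%Z.

Record padic_int := PadicInt { zpval : nat -> int; zpvalP : zp_coherent zpval }.

HB.instance Definition _ := gen_eqMixin padic_int.
HB.instance Definition _ := gen_choiceMixin padic_int.

Lemma zpmod_neq0 n : zpmod n != 0.
Proof. rewrite /zpmod eqz_nat expn_eq0 negb_and; apply/orP; left; rewrite -lt0n; by apply: leq_trans (leq_maxr _ _). Qed.

Lemma zpmodS n : zpmod n.+1 = zpmod n * (maxn p 2)%:Z.
Proof. by rewrite /zpmod expnS mulnC PoszM. Qed.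

Lemma zp_red_red n (a : int) : modz (modz a (zpmod n.+1)) (zpmod n) = modz a (zpmod n).
Proof.
rewrite [in RHS](divz_eq a (zpmod n.+1)) zpmodS [zpmod n * _]mulrC mulrA modzMDl.
by [].
Qed.

Lemma zp_eq (x y : padic_int) : zpval x =1 zpval y -> x = y.
Proof.
case: x y => [x xP] [y yP] /= /funext exy; subst y.
by rewrite (Prop_irrelevance xP yP).
Qed.


Definition zp_red_of (g : nat -> int)
  (gP : forall n, (g n.+1 = g n %[mod zpmod n])%Z) : padic_int.
Proof.
refine (@PadicInt (fun n => (g n %% zpmod n)%Z) _) => n.
by rewrite zp_red_red gP.
Defined.

Lemma zp_cong (x : padic_int) n : (zpval x n.+1 = zpval x n %[mod zpmod n])%Z.
Proof. by rewrite [zpval x n](zpvalP x) modz_mod. Qed.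

Lemma zp_reduced (x : padic_int) n : (zpval x n %% zpmod n)%Z = zpval x n.
Proof. by rewrite [in RHS](zpvalP x) [in LHS](zpvalP x) modz_mod. Qed.

Definition zp0 := @zp_red_of (fun _ => 0) (fun _ => erefl).
Definition zp1 := @zp_red_of (fun _ => 1) (fun _ => erefl).

Lemma zp_opp_cong (x : padic_int) n :
  ((- zpval x n.+1) = - zpval x n %[mod zpmod n])%Z.
Proof. by rewrite -modzNm zp_cong modzNm. Qed.

Lemma zp_add_cong (x y : padic_int) n :
  ((zpval x n.+1 + zpval y n.+1) = zpval x n + zpval y n %[mod zpmod n])%Z.
Proof. by rewrite -modzDm !zp_cong modzDm. Qed.

Lemma zp_mul_cong (x y : padic_int) n :
  ((zpval x n.+1 * zpval y n.+1) = zpval x n * zpval y n %[mod zpmod n])%Z.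
Proof. by rewrite -modzMm !zp_cong modzMm. Qed.

Definition zp_opp x := @zp_red_of _ (zp_opp_cong x).
Definition zp_add x y := @zp_red_of _ (zp_add_cong x y).
Definition zp_mul x y := @zp_red_of _ (zp_mul_cong x y).

Lemma zp_addA : associative zp_add.
Proof. by move=> x y z; apply: zp_eq => n /=; rewrite modzDml modzDmr addrA. Qed.
Lemma zp_addC : commutative zp_add.
Proof. by move=> x y; apply: zp_eq => n /=; rewrite addrC. Qed.
Lemma zp_add0 : left_id zp0 zp_add.
Proof. by move=> x; apply: zp_eq => n /=; rewrite mod0z add0r zp_reduced. Qed.
Lemma zp_addN : left_inverse zp0 zp_opp zp_add.
Proof. by move=> x; apply: zp_eq => n /=; rewrite modzDml addNr. Qed.

HB.instance Definition _ :=
  GRing.isZmodule.Build padic_int zp_addA zp_addC zp_add0 zp_addN.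

Lemma zp_mulA : associative zp_mul.
Proof. by move=> x y z; apply: zp_eq => n /=; rewrite modzMml modzMmr mulrA. Qed.
Lemma zp_mulC : commutative zp_mul.
Proof. by move=> x y; apply: zp_eq => n /=; rewrite mulrC. Qed.
Lemma zp_mul1 : left_id zp1 zp_mul.
Proof. by move=> x; apply: zp_eq => n /=; rewrite modzMml mul1r zp_reduced. Qed.
Lemma zp_mulDl : left_distributive zp_mul zp_add.
Proof.
move=> x y z; apply: zp_eq => n /=.
by rewrite modzMml -modzDm modz_mod modz_mod modzDm mulrDl.
Qed.
Lemma zp_one_neq0 : zp1 != (zp0 : padic_int).
Proof.
apply/eqP => /(congr1 (fun x => zpval x 1%N)) /=.
rewrite mod0z modz_small // /zpmod expn1 ltz_nat.
by case: p => [|[|q]].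
Qed.

HB.instance Definition _ :=
  GRing.Zmodule_isComNzRing.Build padic_int zp_mulA zp_mulC zp_mul1 zp_mulDl
    zp_one_neq0.

Definition zp_unit : {pred padic_int} :=
  fun x => `[< exists y : padic_int, y * x = 1 >].

Definition zp_inv (x : padic_int) : padic_int :=
  match pselect (exists y : padic_int, y * x = 1) with
  | left h => projT1 (cid h)
  | right _ => x
  end.

Lemma zp_mulVx : {in zp_unit, left_inverse 1 zp_inv *%R}.
Proof.
move=> x hx; have /asboolP h := hx; rewrite /zp_inv.
by case: pselect => // h'; case: cid.
Qed.

Lemma zp_unitPl (x y : padic_int) : y * x = 1 -> zp_unit x.
Proof. by move=> h; apply/asboolP; exists y. Qed.

Lemma zp_inv_out : {in [predC zp_unit], zp_inv =1 id}.
Proof.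
move=> x; rewrite inE /= => hx; have h : ~ (exists y : padic_int, y * x = 1) by move=> /asboolP h'; rewrite /in_mem /= /zp_unit h' in hx.
rewrite /zp_inv.
by case: pselect.
Qed.

HB.instance Definition _ :=
  GRing.ComNzRing_hasMulInverse.Build padic_int zp_mulVx zp_unitPl zp_inv_out.

End Padic.

Notation "''Z_[' p ]" := (padic_int p) (format "''Z_[' p ]") : type_scope.

Definition mx22 (R : nzRingType) (a b c d : R) : 'M[R]_2 :=
  \matrix_(i < 2, j < 2)
    if i == 0 then (if j == 0 then a else b) else (if j == 0 then c else d).

Definition mult_similar (R : comUnitRingType) (A A' : 'M[R]_2) : Prop :=
  exists (u : R) (B : 'M[R]_2),
    [/\ u \is a GRing.unit, B \in unitmx & A' = u *: (invmx B *m A *m B)].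

Definition mx_nilpotent (R : nzRingType) (A : 'M[R]_2) : Prop :=
  exists k : nat, A ^+ k = 0.

Definition nonsquare_mod_p (p : nat) (rho : 'Z_[p]) : Prop :=
  ~ exists x y : 'Z_[p], rho = x ^+ 2 + p%:R * y.

Definition core_matrix (p : nat) (rho : 'Z_[p]) (A0 : 'M['Z_[p]]_2) : Prop :=
  [\/ A0 = 1,
      exists (r : nat) (d : 'Z_[p]),
        (0 < r)%N /\ A0 = 1 + (p%:R ^+ r) *: mx22 0 d 1 0,
      exists (r : nat) (d : 'Z_[p]), A0 = mx22 0 d 1 (p%:R ^+ r) |
      exists r : nat,
        A0 = mx22 0 (p%:R ^+ r) 1 0 \/ A0 = mx22 0 (rho * p%:R ^+ r) 1 0].

(* Main.v *)
Require Import Defs.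
From HB Require Import structures.
From mathcomp Require Import all_boot all_order all_algebra.
From mathcomp Require Import boolp.
Import Order.TTheory GRing.Theory Num.Theory.
Local Open Scope ring_scope.
From mathcomp Require Import ring zify.
Set Implicit Arguments. Unset Strict Implicit. Unset Printing Implicit Defensive.

Lemma mod_mod_dvd (a d e : int) : (d %| e)%Z -> modz (modz a e) d = modz a d.
Proof.
move=> /dvdzP [q ->]; by rewrite [in RHS](divz_eq a (q * d)) mulrA modzMDl.
Qed.

Lemma sq_classes (F : finFieldType) (a r : F) : (2 : F) != 0 -> a != 0 ->
  (forall x, r != x ^+ 2) -> exists x, a = x ^+ 2 \/ a = r * x ^+ 2.
Proof.
move=> h2 ha hr.
have r0 : r != 0 by have := hr 0; rewrite expr2 mul0r.
pose U := [set x : F | x != 0].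
pose S := [set x ^+ 2 | x in U].
pose R := [set r * y | y in S].
have SU : S \subset U.
  by apply/subsetP => _ /imsetP [x hx ->]; rewrite /U !inE in hx *; apply: expf_neq0.
have RU : R \subset U.
  apply/subsetP => _ /imsetP [y hy ->]; have := subsetP SU y hy.
  by rewrite /U !inE => hy'; apply: mulf_neq0.
have dis : [disjoint S & R].
  apply/pred0P => y /=; apply/negP => /andP [/imsetP [x hx ->]].
  case/imsetP => _ /imsetP [w hw ->] e.
  rewrite /U inE in hw; apply: (negP (hr (x / w))); apply/eqP.
  by rewrite expr_div_n e mulfK //; apply: expf_neq0.
have cR : #|R| = #|S| by apply: card_imset; exact: mulfI.
have cU : (#|U| <= 2 * #|S|)%N.
  rewrite -sum1_card (partition_big_imset (fun x => x ^+ 2)) /= -/S.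
  rewrite mulnC -sum_nat_const; apply: leq_sum => _ /imsetP [z hz ->].
  have -> : (\sum_(i in U | i ^+ 2 == z ^+ 2) 1)%N = #|[pred i in U | i ^+ 2 == z ^+ 2]|.
    by rewrite -sum1_card.
  apply: leq_trans (_ : #|[set z; - z]| <= 2)%N; last by rewrite cards2; case: (_ != _).
  apply: subset_leq_card; apply/subsetP => i; rewrite !inE eqf_sqr.
  by case/andP.
have cSR : #|S :|: R| = (#|S| + #|R|)%N by rewrite cardsU disjoint_setI0 // cards0 subn0.
have SRU : S :|: R = U.
  apply/eqP; rewrite eqEcard subUset SU RU /= cSR cR addnn -mul2n //.
have : a \in U by rewrite /U inE.
rewrite -SRU inE => /orP [/imsetP [x _ ->] | /imsetP [y /imsetP [x _ ->] ->]];
  exists x; [left|right] => //.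
Qed.

Section ZP.
Variable p : nat.
Hypothesis pP : prime p.
Local Notation Z := ('Z_[p]).
Local Notation P := (p%:R : Z).

Lemma p_gt1 : (1 < p)%N. Proof. exact: prime_gt1. Qed.

Lemma zpmodE n : zpmod p n = (p ^ n)%N%:Z.
Proof. by rewrite /zpmod (maxn_idPl _) // p_gt1. Qed.

Lemma zpmod_gt0 n : 0 < zpmod p n.
Proof. by rewrite zpmodE ltz_nat expn_gt0 prime_gt0. Qed.

Lemma zpmod_dvd m n : (m <= n)%N -> (zpmod p m %| zpmod p n)%Z.
Proof. by move=> h; rewrite !zpmodE dvdzE /= dvdn_exp2l. Qed.

Lemma zpval_ge0 (x : Z) n : 0 <= zpval x n.
Proof. by rewrite -zp_reduced modz_ge0 // zpmod_neq0. Qed.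

Lemma zpval_lt (x : Z) n : zpval x n < zpmod p n.
Proof. by rewrite -zp_reduced ltz_pmod // zpmod_gt0. Qed.

Lemma zpvalD (x y : Z) n : zpval (x + y) n = ((zpval x n + zpval y n) %% zpmod p n)%Z.
Proof. by rewrite /GRing.add /=. Qed.
Lemma zpvalM (x y : Z) n : zpval (x * y) n = ((zpval x n * zpval y n) %% zpmod p n)%Z.
Proof. by rewrite /GRing.add /=. Qed.
Lemma zpvalN (x : Z) n : zpval (- x) n = ((- zpval x n) %% zpmod p n)%Z.
Proof. by rewrite /GRing.add /=. Qed.
Lemma zpval0 n : zpval (0 : Z) n = 0.
Proof. by rewrite /= mod0z. Qed.
Lemma zpval1 n : zpval (1 : Z) n = (1 %% zpmod p n)%Z.
Proof. by rewrite /GRing.add /=. Qed.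

Lemma zp_coh (x : Z) m n : (m <= n)%N -> zpval x m = (zpval x n %% zpmod p m)%Z.
Proof.
elim: n => [|n IH]; first by rewrite leqn0 => /eqP ->; rewrite zp_reduced.
rewrite leq_eqVlt => /orP [/eqP -> | ]; first by rewrite zp_reduced.
rewrite ltnS => h; rewrite (IH h) (zpvalP x n) mod_mod_dvd //.
exact: zpmod_dvd.
Qed.

Lemma zpval_nat k n : zpval (k%:R : Z) n = (k%:Z %% zpmod p n)%Z.
Proof.
elim: k => [|k IH]; first by rewrite zpval0 mod0z.
by rewrite -addn1 natrD zpvalD IH zpval1 modzDm PoszD.
Qed.

Definition I n (x : Z) := zpval x n = 0.

Lemma I_add n x y : I n x -> I n y -> I n (x + y).
Proof. by rewrite /I zpvalD => -> ->; rewrite mod0z. Qed.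
Lemma I_mull n x y : I n x -> I n (x * y).
Proof. by rewrite /I zpvalM => ->; rewrite mul0r mod0z. Qed.
Lemma I_mulr n x y : I n y -> I n (x * y).
Proof. by rewrite mulrC; apply: I_mull. Qed.
Lemma I_opp n x : I n x -> I n (- x).
Proof. by rewrite /I zpvalN => ->; rewrite oppr0 mod0z. Qed.
Lemma I_sub n x y : I n x -> I n y -> I n (x - y).
Proof. by move=> hx hy; apply: I_add => //; apply: I_opp. Qed.
Lemma I0 x : I 0 x.
Proof.
rewrite /I; apply/eqP; rewrite eq_le zpval_ge0 andbT.
have := zpval_lt x 0; rewrite zpmodE expn0 => h; lia.
Qed.
Lemma I_zero n : I n 0. Proof. exact: zpval0. Qed.
Lemma I_le m n x : (m <= n)%N -> I n x -> I m x.
Proof. by move=> h; rewrite /I (zp_coh x h) => ->; rewrite mod0z. Qed.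
Lemma I_pX n k : (n <= k)%N -> I n (P ^+ k).
Proof.
move=> h; rewrite /I -natrX zpval_nat zpmodE; apply/dvdz_mod0P.
by rewrite dvdzE /= dvdn_exp2l.
Qed.
Lemma I_eq0 x : (forall n, I n x) -> x = 0.
Proof. by move=> h; apply: zp_eq => n; rewrite h zpval0. Qed.
Lemma I_diff n x y : I n (x - y) -> zpval x n = zpval y n.
Proof.
rewrite /I zpvalD zpvalN modzDmr => h.
by rewrite -zp_reduced -[zpval x n](subrK (zpval y n)) -modzDml h add0r zp_reduced.
Qed.

Lemma zpmod1 : zpmod p 1 = p%:Z.
Proof. by rewrite zpmodE expn1. Qed.

Lemma zpmodS' n : zpmod p n.+1 = zpmod p n * p%:Z.
Proof. by rewrite zpmodS (maxn_idPl p_gt1). Qed.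

Lemma p_neq0z : p%:Z != 0.
Proof. by rewrite eqz_nat -lt0n prime_gt0. Qed.

Lemma zdivp_cong (x : Z) n :
  ((zpval x n.+2 %/ p%:Z)%Z = (zpval x n.+1 %/ p%:Z)%Z %[mod zpmod p n])%Z.
Proof.
set a := zpval x n.+2.
rewrite (zpvalP x n.+1) -/a {1}(divz_eq a (zpmod p n.+1)) zpmodS'.
by rewrite mulrA divzMDl ?p_neq0z // modzMDl.
Qed.

Definition zdivp (x : Z) : Z := @zp_red_of p _ (zdivp_cong x).

Lemma zdivpE x : I 1 x -> x = P * zdivp x.
Proof.
move=> h; apply: zp_eq => n; rewrite zpvalM zpval_nat /= modzMm.
have h1 : (zpval x n.+1 %% p%:Z)%Z = 0 by rewrite -zpmod1 -zp_coh.
rewrite [in RHS]mulrC.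
have -> : ((zpval x n.+1 %/ p%:Z)%Z * p%:Z) = zpval x n.+1.
  by rewrite [in RHS](divz_eq (zpval x n.+1) p%:Z) h1 addr0.
exact: zp_coh.
Qed.

Lemma I_pS n y : I n y -> I n.+1 (P * y).
Proof.
move=> h; rewrite /I zpvalM zpval_nat modzMml.
have : (zpmod p n %| zpval y n.+1)%Z by apply/dvdz_mod0P; rewrite -(zpvalP y n).
case/dvdzP => q ->; rewrite zpmodS'.
by rewrite mulrCA [(p%:Z) * _]mulrC modzMl.
Qed.

Lemma I1P y : I 1 (P * y).
Proof. exact/I_pS/I0. Qed.

Lemma zp_lim (z : nat -> Z) : (forall n, I n (z n.+1 - z n)) ->
  exists x : Z, forall n, I n (x - z n).
Proof.
move=> h.
have gP : forall n, (zpval (z n.+1) n.+1 = zpval (z n) n %[mod zpmod p n])%Z.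
  by move=> n; rewrite -(zpvalP (z n.+1) n) zp_reduced; apply: I_diff.
exists (@zp_red_of p _ gP) => n.
by rewrite /I zpvalD zpvalN modzDmr /= zp_reduced subrr mod0z.
Qed.

Definition red (x : Z) : 'F_p := (zpval x 1)%:~R.

Lemma red_mod (a : int) : (((a %% p%:Z)%Z)%:~R : 'F_p) = a%:~R.
Proof.
have -> : (a%:~R : 'F_p) = ((a %/ p%:Z)%Z * p%:Z + (a %% p%:Z)%Z)%:~R by rewrite -divz_eq.
rewrite [in RHS]intrD [in RHS]intrM.
have -> : ((p%:Z)%:~R : 'F_p) = 0 by exact: (pchar_Fp_0 pP).
by rewrite mulr0 add0r.
Qed.

Lemma redD x y : red (x + y) = red x + red y.
Proof. by rewrite /red zpvalD zpmod1 red_mod intrD. Qed.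
Lemma redM x y : red (x * y) = red x * red y.
Proof. by rewrite /red zpvalM zpmod1 red_mod intrM. Qed.
Lemma redN x : red (- x) = - red x.
Proof. by rewrite /red zpvalN zpmod1 red_mod intrN. Qed.
Lemma redB x y : red (x - y) = red x - red y.
Proof. by rewrite redD redN. Qed.
Lemma red_nat k : red (k%:R) = k%:R.
Proof. by rewrite /red zpval_nat zpmod1 red_mod. Qed.
Lemma red1 : red 1 = 1.
Proof. by have := red_nat 1. Qed.
Lemma redX x k : red (x ^+ k) = red x ^+ k.
Proof. by elim: k => [|k IH]; rewrite ?red1 // !exprS redM IH. Qed.

Lemma red_eq0 x : (red x == 0) = (zpval x 1 == 0).
Proof.
rewrite /red; have := zpval_ge0 x 1; have := zpval_lt x 1; rewrite zpmod1.
case: (zpval x 1) => // m; rewrite ltz_nat => hm _.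
rewrite /intmul -(dvdn_pcharf (pchar_Fp pP)).
case: m hm => [|m] hm; first by rewrite dvdn0.
by rewrite gtnNdvd.
Qed.

Lemma red_I1 x : (red x == 0) = `[< I 1 x >].
Proof. by rewrite red_eq0; apply/eqP/asboolP. Qed.

Definition lft (a : 'F_p) : Z := (val a)%:R.
Lemma red_lft a : red (lft a) = a.
Proof. by rewrite /lft red_nat natr_Zp. Qed.

Lemma unit_red x : x \is a GRing.unit -> red x != 0.
Proof.
move=> hx; apply/eqP => h0.
have := congr1 red (mulVr hx); rewrite redM h0 mulr0 red1 => /eqP.
by rewrite eq_sym oner_eq0.
Qed.

Lemma red_unit x : red x != 0 -> x \is a GRing.unit.
Proof.
move=> hx; set y0 := lft (red x)^-1.
set e := 1 - x * y0.
have he : I 1 e.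
  apply/asboolP; rewrite -red_I1 /e redB redM red_lft red1 mulfV //.
  by rewrite subrr.
have xy0 : x * y0 = 1 - e by rewrite /e opprB addrC subrK.
clearbody e.
have eE := zdivpE he; set t := zdivp e in eE.
pose z := fix z k := if k is k'.+1 then z k' + y0 * e ^+ k else y0.
have hz : forall k, x * z k = 1 - e ^+ k.+1.
  elim=> [|k IH] /=; first by rewrite expr1.
  rewrite mulrDr IH mulrA xy0.
  by rewrite [in RHS]exprS [e ^+ k.+1]exprS mulrBl mul1r addrA subrK.
have [y hy] : exists y, forall n, I n (y - z n).
  apply: zp_lim => n /=; rewrite addrAC subrr add0r eE exprMn.
  by apply/I_mulr/I_mull/I_pX.
apply/unitrPr; exists y; apply/eqP; rewrite -subr_eq0; apply/eqP/I_eq0 => n.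
have -> : x * y - 1 = x * (y - z n) + (x * z n - 1) by ring.
rewrite hz addrAC subrr add0r eE exprMn; apply: I_add; first exact: I_mulr.
by apply/I_opp/I_mull/I_pX.
Qed.

Lemma unitE (x : Z) : (x \is a GRing.unit) = (zpval x 1 != 0).
Proof.
by apply/idP/idP => [/unit_red | h]; rewrite ?red_eq0 // ; apply: red_unit; rewrite red_eq0.
Qed.

Lemma I1_nunit (x : Z) : I 1 x -> x \isn't a GRing.unit.
Proof. by rewrite unitE => ->. Qed.

Lemma nunit_I1 (x : Z) : x \isn't a GRing.unit -> I 1 x.
Proof. by rewrite unitE negbK => /eqP. Qed.

Lemma pX_neq0 k : P ^+ k != 0.
Proof.
apply/eqP => h; have := congr1 (fun x => zpval x k.+1) h.
rewrite /= -natrX zpval_nat mod0z zpmodE modz_nat modn_small; last first.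
  by rewrite ltn_exp2l // p_gt1.
have := expn_gt0 p k; rewrite (prime_gt0 pP) /= => h1 h2; lia.
Qed.

Lemma zp_val x : x != 0 -> exists k u, u \is a GRing.unit /\ x = P ^+ k * u.
Proof.
move=> hx.
have [n hn] : exists n, ~ I n x.
  apply: contrapT => h; apply/(negP hx)/eqP/I_eq0 => n; apply: contrapT => hn.
  by apply: h; exists n.
elim: n x hn {hx} => [|n IH] x hn; first by case: hn; exact: I0.
case: (boolP (zpval x 1 == 0)) => h1.
  have xE := zdivpE (eqP h1).
  have [k [u [hu dE]]] : exists k u, u \is a GRing.unit /\ zdivp x = P ^+ k * u.
    by apply: IH => hI; apply: hn; rewrite xE; exact: I_pS.
  by exists k.+1, u; split => //; rewrite xE dE exprS mulrA.
by exists 0%N, x; split; [rewrite unitE | rewrite expr0 mul1r].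
Qed.

Lemma zp_mul_eq0 (x y : Z) : x * y = 0 -> x = 0 \/ y = 0.
Proof.
move=> h; case: (eqVneq x 0) => hx; [by left|]; case: (eqVneq y 0) => hy; [by right|].
have [a [u [hu xE]]] := zp_val hx; have [b [v [hv yE]]] := zp_val hy.
have huv : u * v \is a GRing.unit by rewrite unitrM hu hv.
have e : x * y = P ^+ (a + b) * (u * v) by rewrite xE yE exprD; ring.
have := pX_neq0 (a + b); rewrite -(mulrK huv (P ^+ (a + b))) -e h mul0r eqxx //.
Qed.

Lemma zp_mulfI (x y z : Z) : x != 0 -> x * y = x * z -> y = z.
Proof.
move=> hx e; have : x * (y - z) = 0 by rewrite mulrBr e subrr.
case/zp_mul_eq0 => [/eqP|/eqP]; first by rewrite (negbTE hx).
by rewrite subr_eq0 => /eqP.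
Qed.

Lemma zp_expf_eq0 (x : Z) k : x ^+ k = 0 -> x = 0.
Proof.
elim: k => [|k IH]; first by move/eqP; rewrite oner_eq0.
by rewrite exprS => /zp_mul_eq0 [//|/IH].
Qed.

Lemma pX_unit_eq a b (u v : Z) : u \is a GRing.unit -> v \is a GRing.unit ->
  P ^+ a * u = P ^+ b * v -> a = b.
Proof.
move=> hu hv e; wlog hab : a b u v hu hv e / (a <= b)%N.
  move=> W; case: (leqP a b) => h; first exact: (W a b u v hu hv e h).
  by symmetry; exact: (W b a v u hv hu (esym e) (ltnW h)).
move: hab; rewrite leq_eqVlt => /orP [/eqP //|hlt].
have [k bE] : exists k, b = (a + k.+1)%N by exists (b - a.+1)%N; lia.
have : u = P * (P ^+ k * v).
  apply: (@zp_mulfI (P ^+ a)); first exact: pX_neq0.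
  by rewrite e bE exprD exprS !mulrA.
by move=> uE; move: hu; rewrite uE; move/negP: (I1_nunit (I1P (P ^+ k * v))).
Qed.

Hypothesis p_odd : odd p.

Lemma red2 : (2 : 'F_p) != 0.
Proof.
rewrite -(dvdn_pcharf (pchar_Fp pP) 2); apply/negP => /(dvdn_leq (isT : (0 < 2)%N)).
have := prime_gt1 pP; move: p_odd; case: (p) => [|[|[|]]] //.
Qed.

Lemma unit2 : (2 : Z) \is a GRing.unit.
Proof. by apply: red_unit; rewrite (red_nat 2); exact: red2. Qed.

Lemma sq_mod (rho : Z) : nonsquare_mod_p rho -> forall w : Z, w \is a GRing.unit ->
  exists x0 : Z, x0 \is a GRing.unit /\ (I 1 (w - x0 ^+ 2) \/ I 1 (w - rho * x0 ^+ 2)).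
Proof.
move=> hns w hw.
have [x hx] : exists x, red w = x ^+ 2 \/ red w = red rho * x ^+ 2.
  apply: sq_classes; [exact: red2 | exact: unit_red | ].
  move=> x; apply/eqP => e; apply: hns; exists (lft x), (zdivp (rho - lft x ^+ 2)).
  have h : I 1 (rho - lft x ^+ 2).
    by apply/asboolP; rewrite -red_I1 redB redX red_lft e subrr.
  by rewrite -(zdivpE h) addrC subrK.
exists (lft x); split.
  apply: red_unit; rewrite red_lft; apply: contraTneq (unit_red hw) => x0.
  by case: hx => ->; rewrite x0 expr2 !mul0r ?mulr0 eqxx.
case: hx => e; [left|right]; apply/asboolP; rewrite -red_I1.
  by rewrite redB redX red_lft e subrr.
by rewrite redB redM redX red_lft e subrr.
Qed.

Lemma hensel (w x0 : Z) : x0 \is a GRing.unit -> I 1 (w - x0 ^+ 2) ->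
  exists x, w = x ^+ 2.
Proof.
move=> hx0 h1.
set c := (2 * x0)^-1.
have hc : 2 * x0 * c = 1 by rewrite mulrV // unitrM unit2 hx0.
pose z := fix z k := if k is k'.+1 then z k' + (w - z k' ^+ 2) * c else x0.
have inv : forall k, (exists a, z k = x0 + P * a) /\
                     (exists f, w - z k ^+ 2 = P ^+ k.+1 * f).
  elim=> [|k [[a za] [f zf]]] /=.
    split; first by exists 0; rewrite mulr0 addr0.
    by exists (zdivp (w - x0 ^+ 2)); rewrite expr1 -zdivpE.
  split.
    by exists (a + P ^+ k * f * c); rewrite zf za exprS; ring.
  exists (- (2 * a * c * f) - P ^+ k * f ^+ 2 * c ^+ 2).
  have wE : w = z k ^+ 2 + P ^+ k.+1 * f by rewrite -zf addrC subrK.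
  rewrite zf {1}wE za.
  transitivity (P ^+ k.+2 * (- (2 * a * c * f) - P ^+ k * f ^+ 2 * c ^+ 2) +
     P ^+ k.+1 * f * (1 - 2 * x0 * c)); first by rewrite !exprS; ring.
  by rewrite hc subrr mulr0 addr0.
have [x hx] : exists x, forall n, I n (x - z n).
  apply: zp_lim => n /=; rewrite addrAC subrr add0r; have [_ [f ->]] := inv n.
  by apply/I_mull/I_mull/I_pX.
exists x; apply/eqP; rewrite -subr_eq0; apply/eqP/I_eq0 => n.
have [_ [f zf]] := inv n.
have -> : w - x ^+ 2 = (w - z n ^+ 2) - (x - z n) * (x + z n) by ring.
rewrite zf; apply: I_sub; first by apply/I_mull/I_pX.
exact/I_mull.
Qed.

Lemma sq_class (rho : Z) : nonsquare_mod_p rho -> rho \is a GRing.unit ->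
  forall w : Z, w \is a GRing.unit ->
  exists x : Z, x \is a GRing.unit /\ (w = x ^+ 2 \/ w = rho * x ^+ 2).
Proof.
move=> hns hr w hw; have [x0 [hx0 [h|h]]] := sq_mod hns hw.
  have [x xE] := hensel hx0 h; exists x; split; last by left.
  by rewrite -(unitrX_pos _ (isT : (0 < 2)%N)) -xE.
have h' : I 1 (w / rho - x0 ^+ 2).
  have -> : w / rho - x0 ^+ 2 = (w - rho * x0 ^+ 2) * rho^-1.
    by rewrite mulrBl [rho * _]mulrC mulrK.
  exact: I_mull.
have [x xE] := hensel hx0 h'; exists x; split.
  by rewrite -(unitrX_pos _ (isT : (0 < 2)%N)) -xE unitrM hw unitrV.
by right; rewrite -xE mulrC divrK.
Qed.

End ZP.

Section MX22.
Variable R : comNzRingType.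

Lemma mx22E (A : 'M[R]_2) : A = mx22 (A 0 0) (A 0 1) (A 1 0) (A 1 1).
Proof.
apply/matrixP => i j; rewrite !mxE.
by case: i => [[|[|//]]] ?; case: j => [[|[|//]]] ? /=; congr (A _ _); apply: val_inj.
Qed.

Lemma mx22_entries (a b c d : R) :
  [/\ mx22 a b c d 0 0 = a, mx22 a b c d 0 1 = b, mx22 a b c d 1 0 = c & mx22 a b c d 1 1 = d].
Proof. by rewrite !mxE. Qed.

Lemma mx22_inj (a b c d a' b' c' d' : R) : mx22 a b c d = mx22 a' b' c' d' ->
  [/\ a = a', b = b', c = c' & d = d'].
Proof.
move=> e; have f i j := congr1 (fun M : 'M[R]_2 => M i j) e.
by have := f 0 0; have := f 0 1; have := f 1 0; have := f 1 1; rewrite !mxE /=.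
Qed.

Lemma mx22_mul (a b c d a' b' c' d' : R) :
  mx22 a b c d *m mx22 a' b' c' d' =
  mx22 (a * a' + b * c') (a * b' + b * d') (c * a' + d * c') (c * b' + d * d').
Proof.
apply/matrixP => i j; rewrite !mxE !big_ord_recl big_ord0 !mxE /=.
by case: i => [[|[|//]]] ?; case: j => [[|[|//]]] ? /=; rewrite addr0.
Qed.

Lemma mx22_scale (k a b c d : R) : k *: mx22 a b c d = mx22 (k * a) (k * b) (k * c) (k * d).
Proof.
apply/matrixP => i j; rewrite !mxE.
by case: i => [[|[|//]]] ?; case: j => [[|[|//]]] ? /=.
Qed.

Lemma mx22_add (a b c d a' b' c' d' : R) :
  mx22 a b c d + mx22 a' b' c' d' = mx22 (a + a') (b + b') (c + c') (d + d').
Proof.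
apply/matrixP => i j; rewrite !mxE.
by case: i => [[|[|//]]] ?; case: j => [[|[|//]]] ? /=.
Qed.

Lemma mx22_scalar (k : R) : k%:M = mx22 k 0 0 k :> 'M[R]_2.
Proof.
apply/matrixP => i j; rewrite !mxE.
by case: i => [[|[|//]]] ?; case: j => [[|[|//]]] ? /=.
Qed.

Lemma mx22_1 : 1 = mx22 1 0 0 1 :> 'M[R]_2.
Proof. by rewrite -mx22_scalar. Qed.

Lemma mx22_0 : 0 = mx22 0 0 0 0 :> 'M[R]_2.
Proof.
apply/matrixP => i j; rewrite !mxE.
by case: i => [[|[|//]]] ?; case: j => [[|[|//]]] ? /=.
Qed.

Lemma det22 (A : 'M[R]_2) : \det A = A 0 0 * A 1 1 - A 0 1 * A 1 0.
Proof.
rewrite (expand_det_row _ 0) !big_ord_recl big_ord0 /cofactor !det_mx11 !mxE /=.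
have -> : lift 0 (0 : 'I_1) = 1 :> 'I_2 by apply: val_inj.
have -> : lift 1 (0 : 'I_1) = 0 :> 'I_2 by apply: val_inj.
rewrite /= expr0 expr1; ring.
Qed.

Lemma det_mx22 (a b c d : R) : \det (mx22 a b c d) = a * d - b * c.
Proof. by rewrite det22 !mxE. Qed.

Lemma tr_mx22 (a b c d : R) : \tr (mx22 a b c d) = a + d.
Proof. by rewrite /mxtrace !big_ord_recl big_ord0 !mxE /= addr0. Qed.

End MX22.

Section MZ.
Variable p : nat.
Hypothesis pP : prime p.
Hypothesis p_odd : odd p.
Local Notation Z := ('Z_[p]).
Local Notation P := (p%:R : Z).
Local Notation M := ('M[Z]_2).

Definition nu (x : Z) := x \isn't a GRing.unit.

Lemma nu_add x y : nu x -> nu y -> nu (x + y).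
Proof. by move=> hx hy; apply: (I1_nunit pP); apply: I_add; apply: (nunit_I1 pP). Qed.
Lemma nu_opp x : nu x -> nu (- x).
Proof. by move=> hx; apply: (I1_nunit pP); apply: I_opp; apply: (nunit_I1 pP). Qed.
Lemma nu_sub x y : nu x -> nu y -> nu (x - y).
Proof. by move=> hx hy; apply: nu_add => //; apply: nu_opp. Qed.
Lemma nu_mull x y : nu x -> nu (x * y).
Proof. by move=> hx; apply: (I1_nunit pP); apply: I_mull; apply: (nunit_I1 pP). Qed.
Lemma nu_mulr x y : nu y -> nu (x * y).
Proof. by rewrite mulrC; apply: nu_mull. Qed.
Lemma nuP y : nu (P * y).
Proof. by apply: (I1_nunit pP); apply: I1P. Qed.
Lemma nu0 : nu 0.
Proof. by rewrite /nu unitr0. Qed.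
Lemma u_add x y : x \is a GRing.unit -> nu y -> (x + y) \is a GRing.unit.
Proof.
move=> hx hy; apply: contraTT hx => h; have := nu_sub h hy.
by rewrite /nu addrK.
Qed.
Lemma nu_mulu x v : v \is a GRing.unit -> nu (v * x) -> nu x.
Proof. by move=> hv; apply: contra => hx; rewrite unitrM hv hx. Qed.
Lemma unit_neq0 (x : Z) : x \is a GRing.unit -> x != 0.
Proof. by apply: contraTneq => ->; rewrite unitr0. Qed.

Lemma ms_intro (A B0 : M) u B : u \is a GRing.unit -> B \in unitmx ->
  u *: (A *m B) = B *m B0 -> mult_similar A B0.
Proof.
move=> hu hB e; exists u, B; split => //.
by rewrite -[B0](mulKmx hB) -e -scalemxAr mulmxA.
Qed.

Lemma ms_elim (A B0 : M) : mult_similar A B0 ->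
  exists u B, [/\ u \is a GRing.unit, B \in unitmx & u *: (A *m B) = B *m B0].
Proof.
move=> [u [B [hu hB ->]]]; exists u, B; split => //.
by rewrite -scalemxAr !mulmxA mulmxV // mul1mx.
Qed.

Lemma ms_sym (A B0 : M) : mult_similar A B0 -> mult_similar B0 A.
Proof.
move=> /ms_elim [u [B [hu hB e]]].
apply: (@ms_intro _ _ u^-1 (invmx B)); rewrite ?unitrV ?unitmx_inv //.
apply: (canRL (mulKmx hB)); rewrite -scalemxAr mulmxA -e -scalemxAl.
by rewrite scalerA mulVr // scale1r -mulmxA mulmxV // mulmx1.
Qed.

Lemma ms_trans (A B0 C0 : M) : mult_similar A B0 -> mult_similar B0 C0 ->
  mult_similar A C0.
Proof.
move=> /ms_elim [u [B [hu hB e]]] /ms_elim [v [C [hv hC f]]].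
apply: (@ms_intro _ _ (u * v) (B *m C)); rewrite ?unitrM ?unitmx_mul ?hu ?hv ?hB //.
by rewrite mulrC -scalerA mulmxA scalemxAl e -!mulmxA scalemxAr f.
Qed.

Lemma ms_refl (A : M) : mult_similar A A.
Proof. by apply: (@ms_intro _ _ 1 1); rewrite ?unitr1 ?unitmx1 // scale1r mulmx1 mul1mx. Qed.

Lemma ms_inv (A B0 : M) : mult_similar A B0 -> exists u, [/\ u \is a GRing.unit,
   \tr B0 = u * \tr A, \det B0 = u ^+ 2 * \det A &
   forall (lam c : Z) (X : M), A = lam%:M + c *: X ->
     exists X' : M, B0 = (u * lam)%:M + c *: X'].
Proof.
move=> [u [B [hu hB ->]]]; exists u; split => //.
- by rewrite mxtraceZ -mulmxA mxtrace_mulC -mulmxA mulmxV // mulmx1.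
- rewrite detZ !det_mulmx det_inv [(_ * \det A) * _]mulrAC mulVr ?mul1r //.
- move=> lam c X ->; exists (u *: (invmx B *m X *m B)).
  rewrite mulmxDr mulmxDl mul_mx_scalar -scalemxAl mulVmx // scalemx1.
  rewrite -!scalemxAr -!scalemxAl scalerDr scale_scalar_mx.
  by rewrite !scalerA [u * c]mulrC.
Qed.

Definition prim (A : M) := exists i j, A i j \is a GRing.unit.

Lemma content (A : M) : A != 0 -> exists s (A1 : M), prim A1 /\ A = P ^+ s *: A1.
Proof.
move=> hA.
have [n hn] : exists n, ~ (forall i j, I n (A i j)).
  apply: contrapT => h; apply/(negP hA)/eqP/matrixP => i j; rewrite mxE.
  apply: I_eq0 => n; apply: contrapT => hn; apply: h; exists n => H; apply: hn; exact: H.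
elim: n A hn {hA} => [|n IH] A hn; first by case: hn => i j; exact: I0.
case: (pselect (prim A)) => hp; first by exists 0%N, A; rewrite expr0 scale1r.
have hI : forall i j, I 1 (A i j).
  by move=> i j; apply: (nunit_I1 pP); apply/negP => hu; apply: hp; exists i, j.
set A' := map_mx (@zdivp p pP) A.
have AE : A = P *: A' by apply/matrixP => i j; rewrite !mxE; exact: (zdivpE pP (hI i j)).
have [s [A1 [h1 e1]]] : exists s (A1 : M), prim A1 /\ A' = P ^+ s *: A1.
  by apply: IH => H; apply: hn => i j; rewrite AE mxE; exact: (I_pS pP (H i j)).
by exists s.+1, A1; split => //; rewrite AE e1 scalerA exprS.
Qed.

Lemma scalemx_inj (c : Z) (X Y : M) : c != 0 -> c *: X = c *: Y -> X = Y.
Proof.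
move=> hc e; apply/matrixP => i j; have := congr1 (fun N : M => N i j) e.
by rewrite !mxE; exact: (zp_mulfI pP hc).
Qed.

Lemma content_le a b (Y W : M) : P ^+ a *: Y = P ^+ b *: W -> prim Y -> (b <= a)%N.
Proof.
move=> e [i [j hu]]; rewrite leqNgt; apply/negP => hlt.
have [k bE] : exists k, b = (a + k.+1)%N by exists (b - a.+1)%N; lia.
have : Y = P ^+ k.+1 *: W.
  apply: (@scalemx_inj (P ^+ a)); first exact: (pX_neq0 pP).
  by rewrite e bE exprD scalerA.
move/matrixP/(_ i j); rewrite mxE exprS -mulrA => YE; move: hu; rewrite YE.
by apply/negP; exact: nuP.
Qed.

Lemma ms_cancel s (Y W : M) : mult_similar (P ^+ s *: Y) (P ^+ s *: W) ->
  mult_similar Y W.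
Proof.
move=> [u [B [hu hB e]]]; exists u, B; split; [exact: hu | exact: hB |].
apply: (@scalemx_inj (P ^+ s)); first exact: (pX_neq0 pP).
rewrite e -scalemxAr -scalemxAl !scalerA; congr (_ *: _); exact: mulrC.
Qed.

Lemma prim_mx22 (a b c d : Z) : prim (mx22 a b c d) ->
  ~ [/\ nu a, nu b, nu c & nu d].
Proof.
move=> [i [j]]; rewrite mxE => hu [ha hb hc hd]; move: hu.
case: i => [[|[|//]]] ?; case: j => [[|[|//]]] ? /=; by apply/negP.
Qed.

Lemma CH0 (a b c d : Z) : a * d - b * c = 0 ->
  mx22 a b c d *m mx22 a b c d = (a + d) *: mx22 a b c d.
Proof.
move/eqP; rewrite subr_eq0 => /eqP bc.
rewrite mx22_mul mx22_scale; congr mx22.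
- by rewrite -bc; ring.
- by ring.
- by ring.
- by rewrite [c * b]mulrC -bc; ring.
Qed.

Lemma cyc (a b c d : Z) : ~ [/\ nu b, nu c & nu (d - a)] ->
  exists B : M, B \in unitmx /\
    mx22 a b c d *m B = B *m mx22 0 (- (a * d - b * c)) 1 (a + d).
Proof.
move=> h.
case: (boolP (c \is a GRing.unit)) => hc.
  exists (mx22 1 a 0 c); split; first by rewrite unitmxE det_mx22 mul1r mulr0 subr0.
  by rewrite !mx22_mul; congr mx22; ring.
case: (boolP (b \is a GRing.unit)) => hb.
  exists (mx22 0 b 1 d); split.
    by rewrite unitmxE det_mx22 mul0r sub0r mulr1 unitrN.
  by rewrite !mx22_mul; congr mx22; ring.
case: (boolP ((d - a) \is a GRing.unit)) => hda; last by exfalso; apply: h.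
exists (mx22 1 (a + b) 1 (c + d)); split.
  rewrite unitmxE det_mx22 mul1r mulr1.
  have -> : c + d - (a + b) = (d - a) + (c - b) by ring.
  by apply: u_add => //; apply: nu_sub.
by rewrite !mx22_mul; congr mx22; ring.
Qed.

End MZ.

Section EX.
Variable p : nat.
Hypothesis pP : prime p.
Hypothesis p_odd : odd p.
Local Notation Z := ('Z_[p]).
Local Notation P := (p%:R : Z).
Local Notation M := ('M[Z]_2).

Lemma ms_comp (A A1 B C : M) s (v : Z) : v \is a GRing.unit -> B \in unitmx ->
  A = P ^+ s *: A1 -> (v *: A1) *m B = B *m C -> mult_similar A (P ^+ s *: C).
Proof.
move=> hv hB AE e; apply: (ms_intro hv hB).
rewrite AE -scalemxAr -e -!scalemxAl !scalerA; congr (_ *: _); exact: mulrC.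
Qed.

Lemma key_cyc (a b c d v : Z) : v \is a GRing.unit ->
  ~ [/\ nu b, nu c & nu (d - a)] ->
  exists B : M, B \in unitmx /\ (v *: mx22 a b c d) *m B =
    B *m mx22 0 (- (v ^+ 2 * (a * d - b * c))) 1 (v * (a + d)).
Proof.
move=> hv hc.
have h' : ~ [/\ nu (v * b), nu (v * c) & nu (v * d - v * a)].
  move=> [h1 h2 h3]; apply: hc; split; first exact: (nu_mulu hv h1).
    exact: (nu_mulu hv h2).
  by apply: (nu_mulu hv); rewrite mulrBr.
have [B [hB e]] := cyc pP h'; exists B; split; first exact: hB.
rewrite mx22_scale e.
have -> : - (v * a * (v * d) - v * b * (v * c)) = - (v ^+ 2 * (a * d - b * c)) by ring.
by have -> : v * a + v * d = v * (a + d) by ring.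
Qed.

Lemma exist_cyc (rho : Z) (hns : nonsquare_mod_p rho) (hr : rho \is a GRing.unit)
  (A : M) s (a b c d : Z) :
  A = P ^+ s *: mx22 a b c d -> ~ [/\ nu b, nu c & nu (d - a)] -> ~ mx_nilpotent A ->
  exists M0 : M, (exists s' (A0 : M), core_matrix rho A0 /\ M0 = P ^+ s' *: A0)
    /\ mult_similar A M0.
Proof.
move=> AE hc hnil.
case: (eqVneq (a + d) 0) => ht; last first.
  have [r [w [hw we]]] := zp_val pP ht.
  have hv : w^-1 \is a GRing.unit by rewrite unitrV.
  have [B [hB e]] := key_cyc hv hc.
  exists (P ^+ s *: mx22 0 (- (w^-1 ^+ 2 * (a * d - b * c))) 1 (P ^+ r)); split.
    exists s, (mx22 0 (- (w^-1 ^+ 2 * (a * d - b * c))) 1 (P ^+ r)); split; last reflexivity.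
    by apply: Or43; exists r, (- (w^-1 ^+ 2 * (a * d - b * c))).
  apply: (ms_comp hv hB AE); rewrite e.
  by rewrite we mulrCA mulVr // mulr1.
case: (eqVneq (a * d - b * c) 0) => hd.
  exfalso; apply: hnil; exists 2%N.
  by rewrite expr2 -mulmxE AE -scalemxAl -scalemxAr (CH0 hd) ht scale0r !scaler0.
have hnd : - (a * d - b * c) != 0 by rewrite oppr_eq0.
have [r [w [hw we]]] := zp_val pP hnd.
have [x [hx hxw]] := sq_class pP p_odd hns hr hw.
have hv : x^-1 \is a GRing.unit by rewrite unitrV.
have hx2 : x ^+ 2 \is a GRing.unit by rewrite unitrX.
have [B [hB e]] := key_cyc hv hc.
have t0 : x^-1 * (a + d) = 0 by rewrite ht mulr0.
have dE : - (x^-1 ^+ 2 * (a * d - b * c)) = P ^+ r * w / x ^+ 2.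
  by rewrite -mulrN we exprVn mulrC.
rewrite t0 dE in e.
case: hxw => wE.
  exists (P ^+ s *: mx22 0 (P ^+ r) 1 0); split.
    exists s, (mx22 0 (P ^+ r) 1 0); split; last reflexivity.
    by apply: Or44; exists r; left.
  by apply: (ms_comp hv hB AE); rewrite e wE mulrK.
exists (P ^+ s *: mx22 0 (rho * P ^+ r) 1 0); split.
  exists s, (mx22 0 (rho * P ^+ r) 1 0); split; last reflexivity.
  by apply: Or44; exists r; right.
by apply: (ms_comp hv hB AE); rewrite e wE mulrA mulrK // [P ^+ r * rho]mulrC.
Qed.

Lemma exist_scal (rho : Z) (A : M) s (a b c d : Z) :
  A = P ^+ s *: mx22 a b c d -> prim (mx22 a b c d) -> [/\ nu b, nu c & nu (d - a)] ->
  exists M0 : M, (exists s' (A0 : M), core_matrix rho A0 /\ M0 = P ^+ s' *: A0)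
    /\ mult_similar A M0.
Proof.
move=> AE hp [hb hc hda].
have ha : a \is a GRing.unit.
  case: (boolP (a \is a GRing.unit)) => // ha; exfalso; apply: (prim_mx22 hp); split => //.
  by rewrite (_ : d = a + (d - a)); [exact: nu_add | rewrite addrC subrK].
case: (eqVneq (mx22 0 b c (d - a)) 0) => hX.
  move: hX; rewrite mx22_0 => /mx22_inj [_ b0 c0 da0].
  have dE : d = a by apply/eqP; rewrite -subr_eq0 da0.
  exists (P ^+ s *: 1); split; first by exists s, 1; split; [exact: Or41 | reflexivity].
  have hai : a^-1 \is a GRing.unit by rewrite unitrV.
  apply: (ms_comp hai (unitmx1 _ _) AE).
  rewrite mulmx1 mul1mx mx22_scale b0 c0 dE mulr0 mulVr //.
  exact: (esym (mx22_1 _)).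
have [r [C [hC XE]]] := content pP hX.
have [c1 [c2 [c3 [c4 CE]]]] : exists c1 c2 c3 c4, C = mx22 c1 c2 c3 c4.
  by do 4!eexists; exact: mx22E.
rewrite CE in hC XE; move: XE; rewrite mx22_scale => /mx22_inj [c1E bE cE daE].
have c10 : c1 = 0.
  case: (zp_mul_eq0 pP (esym c1E)) => // /eqP; by rewrite (negbTE (pX_neq0 pP r)).
case: r bE cE daE {c1E} => [|r'] bE cE daE.
  exfalso; apply: (prim_mx22 hC); rewrite expr0 !mul1r in bE cE daE.
  by rewrite c10 -bE -cE -daE; split => //; exact: nu0.
set R := P ^+ r'.+1 in bE cE daE *.
have h2 := unit2 pP p_odd.
set h := c4 / 2.
have c4E : c4 = h + h by rewrite -mulr2n -mulr_natr /h divrK.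
set q := a + R * h.
have hq : q \is a GRing.unit.
  by apply: (u_add pP ha); rewrite /R exprS -mulrA; exact: nuP.
set v := q^-1.
have hv : v \is a GRing.unit by rewrite unitrV.
have hcyc : ~ [/\ nu (v * c2), nu (v * c3) & nu (v * h - - (v * h))].
  move=> [h2' h3 h4]; apply: (prim_mx22 hC); split.
  - by rewrite c10; exact: nu0.
  - exact: (nu_mulu hv h2').
  - exact: (nu_mulu hv h3).
  - by apply: (nu_mulu hv); move: h4; rewrite opprK c4E mulrDr.
have [B [hB e]] := cyc pP hcyc.
have tr0 : - (v * h) + v * h = 0 by rewrite addNr.
rewrite tr0 in e.
have key : v *: mx22 a b c d = 1 + R *: mx22 (- (v * h)) (v * c2) (v * c3) (v * h).
  rewrite mx22_scale mx22_1 mx22_scale mx22_add; congr mx22.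
  - by rewrite -[in RHS](mulVr hq) -/v /q; ring.
  - by rewrite bE; ring.
  - by rewrite cE; ring.
  - have dE : d = a + R * c4 by rewrite -daE addrC subrK.
    by rewrite dE c4E -[in RHS](mulVr hq) -/v /q; ring.
exists (P ^+ s *: (1 + R *: mx22 0 (- (- (v * h) * (v * h) - v * c2 * (v * c3))) 1 0)).
split.
  exists s, (1 + R *: mx22 0 (- (- (v * h) * (v * h) - v * c2 * (v * c3))) 1 0).
  split; last reflexivity.
  by apply: Or42; exists r'.+1, (- (- (v * h) * (v * h) - v * c2 * (v * c3))).
apply: (ms_comp hv hB AE).
by rewrite key mulmxDl mul1mx -scalemxAl e mulmxDr mulmx1 -scalemxAr.
Qed.

Lemma detX (A : M) k : \det (A ^+ k) = \det A ^+ k.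
Proof.
elim: k => [|k IH]; first by rewrite !expr0 det1.
by rewrite !exprS -mulmxE det_mulmx IH.
Qed.

Lemma exist_nil (A : M) : mx_nilpotent A -> exists M0 : M,
  (M0 = 0 \/ exists s, M0 = P ^+ s *: mx22 0 0 1 0) /\ mult_similar A M0.
Proof.
move=> [k hk].
case: k hk => [|k] hk; first by move/eqP: hk; rewrite expr0 oner_eq0.
case: (eqVneq A 0) => hA.
  by exists 0; split; [left | rewrite hA; exact: ms_refl].
have [s [A1 [hp AE]]] := content pP hA.
have hk1 : A1 ^+ k.+1 = 0.
  apply: (@scalemx_inj _ pP ((P ^+ s) ^+ k.+1)); first by rewrite -exprM; exact: (pX_neq0 pP).
  by rewrite -exprZn -AE hk scaler0.
move: hp hk1 AE; rewrite [A1]mx22E.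
move: (A1 0 0) (A1 0 1) (A1 1 0) (A1 1 1) => a b c d hp hk1 AE.
have hdet : a * d - b * c = 0.
  by apply: (zp_expf_eq0 pP (k := k.+1)); rewrite -det_mx22 -detX hk1 det0.
have ht : a + d = 0.
  have pow : forall n, mx22 a b c d ^+ n.+1 = (a + d) ^+ n *: mx22 a b c d.
    elim=> [|n IH]; first by rewrite expr1 expr0 scale1r.
    by rewrite exprSr IH -mulmxE -scalemxAl (CH0 hdet) scalerA -exprSr.
  have := pow k; rewrite hk1 => /esym h0.
  have [i [j hu]] := hp.
  move/matrixP/(_ i j): h0 => h0; rewrite !mxE in h0 hu.
  case: (zp_mul_eq0 pP h0) => [/(zp_expf_eq0 pP) // | he].
  by move: hu; rewrite he unitr0.
have hcyc : ~ [/\ nu b, nu c & nu (d - a)].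
  move=> [hb hc hda]; apply: (prim_mx22 hp).
  have dE : d = - a by apply/eqP; rewrite -addr_eq0 addrC ht.
  have ha : nu a.
    have -> : a = (d - a) * (- 2^-1).
      have h2 := mulrV (unit2 pP p_odd).
      rewrite dE; transitivity (a * (2 * 2^-1)); first by rewrite h2 mulr1.
      ring.
    exact: nu_mull.
  by split => //; rewrite dE; exact: nu_opp.
have [B [hB e]] := cyc pP hcyc.
exists (P ^+ s *: mx22 0 0 1 0); split; first by right; exists s.
have h1 : (1 : Z) \is a GRing.unit by rewrite unitr1.
by apply: (ms_comp h1 hB AE); rewrite scale1r e hdet ht oppr0.
Qed.

End EX.

Section UN.
Variable p : nat.
Hypothesis pP : prime p.
Hypothesis p_odd : odd p.
Local Notation Z := ('Z_[p]).
Local Notation P := (p%:R : Z).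
Local Notation M := ('M[Z]_2).

Lemma exist_nonnil (rho : Z) (hns : nonsquare_mod_p rho) (hr : rho \is a GRing.unit)
  (A : M) : ~ mx_nilpotent A ->
  exists M0 : M, (exists s' (A0 : M), core_matrix rho A0 /\ M0 = P ^+ s' *: A0)
    /\ mult_similar A M0.
Proof.
move=> hnil.
have hA : A != 0 by apply/eqP => A0; apply: hnil; exists 1%N; rewrite expr1.
have [s [A1 [hp AE]]] := content pP hA.
move: hp AE; rewrite [A1]mx22E.
move: (A1 0 0) (A1 0 1) (A1 1 0) (A1 1 1) => a b c d hp AE.
case: (pselect [/\ nu b, nu c & nu (d - a)]) => hc.
  exact: (exist_scal pP p_odd rho AE hp hc).
exact: (exist_cyc pP p_odd hns hr AE hc hnil).
Qed.

Lemma scalar0 : (0 : Z)%:M = 0 :> M.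
Proof. by rewrite mx22_scalar mx22_0. Qed.

Lemma ms_zero (X : M) : mult_similar 0 X -> X = 0.
Proof.
move=> h; have [u [_ _ _ hl]] := ms_inv h.
have e0 : (0 : M) = 0%:M + 0 *: 0 by rewrite scalar0 scale0r addr0.
have [X' ->] := hl 0 0 0 e0.
by rewrite mulr0 scalar0 scale0r addr0.
Qed.

Lemma ms_content_le s t (Y W : M) : mult_similar (P ^+ s *: Y) (P ^+ t *: W) ->
  prim W -> (s <= t)%N.
Proof.
move=> h hW; have [u [_ _ _ hl]] := ms_inv h.
have e0 : P ^+ s *: Y = 0%:M + P ^+ s *: Y by rewrite scalar0 add0r.
have [X' e] := hl 0 (P ^+ s) Y e0.
rewrite mulr0 scalar0 add0r in e.
exact: (content_le pP p_odd e hW).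
Qed.

Lemma primN0 : prim (mx22 0 0 1 0 : M).
Proof. by exists 1, 0; rewrite mxE /= unitr1. Qed.

Lemma uniq_nil (M1 M2 : M) :
  (M1 = 0 \/ exists s, M1 = P ^+ s *: mx22 0 0 1 0) ->
  (M2 = 0 \/ exists s, M2 = P ^+ s *: mx22 0 0 1 0) ->
  mult_similar M1 M2 -> M1 = M2.
Proof.
move=> [->|[s E1]].
  by move=> _ /ms_zero ->.
move=> [E2|[t E2]] h.
  by rewrite E2; apply: ms_zero; rewrite -E2; exact: ms_sym.
rewrite E1 E2 in h *.
have h1 := ms_content_le h primN0.
have h2 := ms_content_le (ms_sym h) primN0.
by have -> : s = t by apply/eqP; rewrite eqn_leq h1 h2.
Qed.

Lemma core_prim (rho : Z) (hr : rho \is a GRing.unit) (A0 : M) :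
  core_matrix rho A0 -> prim A0.
Proof.
case=> [->|[r [d [_ ->]]]|[r [d ->]]|[r [->|->]]].
- by exists 0, 0; rewrite !mxE /= unitr1.
- by exists 0, 0; rewrite !mxE /= mulr0 addr0 unitr1.
- by exists 1, 0; rewrite !mxE /= unitr1.
- by exists 1, 0; rewrite !mxE /= unitr1.
- by exists 1, 0; rewrite !mxE /= unitr1.
Qed.

Lemma core_mx22 (rho : Z) (A0 : M) : core_matrix rho A0 -> [\/ A0 = mx22 1 0 0 1,
  exists r d, (0 < r)%N /\ A0 = mx22 1 (P ^+ r * d) (P ^+ r) 1,
  exists r d, A0 = mx22 0 d 1 (P ^+ r) |
  exists r e, (e = 1 \/ e = rho) /\ A0 = mx22 0 (e * P ^+ r) 1 0].
Proof.
case=> [->|[r [d [hr ->]]]|[r [d ->]]|[r [->|->]]].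
- by apply: Or41; exact: mx22_1.
- apply: Or42; exists r, d; split; first exact: hr.
  by rewrite mx22_1 mx22_scale mx22_add; congr mx22; ring.
- by apply: Or43; exists r, d.
- by apply: Or44; exists r, 1; split; [left | rewrite mul1r].
- by apply: Or44; exists r, rho; split; [right | ].
Qed.

Lemma val_le a b (y z : Z) : P ^+ a * y = P ^+ b * z -> y \is a GRing.unit ->
  (b <= a)%N.
Proof.
move=> e hu; rewrite leqNgt; apply/negP => hlt.
have [k bE] : exists k, b = (a + k.+1)%N by exists (b - a.+1)%N; lia.
have : y = P * (P ^+ k * z).
  apply: (zp_mulfI pP (pX_neq0 pP a)).
  by rewrite e bE exprD exprS !mulrA.
by move=> yE; move: hu; rewrite yE; apply/negP; exact: nuP.
Qed.

Lemma entry10 (Y : M) lam c X : Y = lam%:M + c *: X -> Y 1 0 = c * X 1 0.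
Proof. by move=> ->; rewrite !mxE /= mulr0n add0r. Qed.

Lemma core_uniq (rho : Z) (hns : nonsquare_mod_p rho) (hr : rho \is a GRing.unit)
  (A0 A0' : M) : core_matrix rho A0 -> core_matrix rho A0' ->
  mult_similar A0 A0' -> A0 = A0'.
Proof.
move=> /core_mx22 h /core_mx22 h' hs.
have [u [hu htr hdet hlin]] := ms_inv hs.
have [u' [hu' htr' hdet' hlin']] := ms_inv (ms_sym hs).
have sc : forall A B : M, (exists X, A = 1%:M + P *: X) -> B 1 0 = 1 ->
    mult_similar A B -> False.
  move=> A B [X AE] hB1 hAB; have [v [_ _ _ hl]] := ms_inv hAB.
  have [X' e] := hl 1 P X AE.
  move: hB1; rewrite (entry10 e) => e1.
  by move: (nuP pP (X' 1 0)); rewrite /nu e1 unitr1.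
have K1s : forall A : M, A = mx22 1 0 0 1 -> exists X, A = 1%:M + P *: X.
  by move=> A ->; exists 0; rewrite scaler0 addr0 mx22_scalar.
have K2s : forall (A : M) r d, (0 < r)%N -> A = mx22 1 (P ^+ r * d) (P ^+ r) 1 ->
    exists X, A = 1%:M + P *: X.
  move=> A [//|r] d _ ->; exists (mx22 0 (P ^+ r * d) (P ^+ r) 0).
  by rewrite mx22_scalar mx22_scale mx22_add exprS; congr mx22; ring.
have sK1 : forall A B : M, A = mx22 1 0 0 1 -> mult_similar A B -> B 1 0 = 0.
  move=> A B AE hAB; have [v [_ _ _ hl]] := ms_inv hAB.
  have e0 : A = 1%:M + 0 *: 0 by rewrite AE scale0r addr0 mx22_scalar.
  by have [X' e] := hl 1 0 0 e0; rewrite (entry10 e) mul0r.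
case: h => [E1|[r [d [hr0 E2]]]|[r [d E3]]|[r [e [he E4]]]];
case: h' => [E1'|[r' [d' [hr' E2']]]|[r' [d' E3']]|[r' [e' [he' E4']]]].
- by rewrite E1 E1'.
- exfalso; have := sK1 _ _ E1 hs; rewrite E2' mxE /= => /eqP.
  by rewrite (negbTE (pX_neq0 pP r')).
- by exfalso; apply: (sc A0 A0' (K1s _ E1) _ hs); rewrite E3' mxE.
- by exfalso; apply: (sc A0 A0' (K1s _ E1) _ hs); rewrite E4' mxE.
- exfalso; have := sK1 _ _ E1' (ms_sym hs); rewrite E2 mxE /= => /eqP.
  by rewrite (negbTE (pX_neq0 pP r)).
- rewrite E2 E2' !tr_mx22 in htr.
  have h2 : (1 + 1 : Z) \is a GRing.unit by rewrite -mulr2n; exact: (unit2 pP p_odd).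
  have u1 : u = 1.
    by apply: (zp_mulfI pP (unit_neq0 h2)); rewrite mulr1 mulrC -htr.
  have le1 : (r <= r')%N.
    have e0 : A0 = 1%:M + P ^+ r *: mx22 0 d 1 0.
      by rewrite E2 mx22_scalar mx22_scale mx22_add; congr mx22; ring.
    have [X' e] := hlin 1 (P ^+ r) _ e0.
    have := entry10 e; rewrite E2' mxE /= => e1.
    by apply: (@val_le r' r 1 (X' 1 0)); [rewrite mulr1 | exact: unitr1].
  have le2 : (r' <= r)%N.
    have e0 : A0' = 1%:M + P ^+ r' *: mx22 0 d' 1 0.
      by rewrite E2' mx22_scalar mx22_scale mx22_add; congr mx22; ring.
    have [X' e] := hlin' 1 (P ^+ r') _ e0.
    have := entry10 e; rewrite E2 mxE /= => e1.
    by apply: (@val_le r r' 1 (X' 1 0)); [rewrite mulr1 | exact: unitr1].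
  have rr : r' = r by apply/eqP; rewrite eqn_leq le2 le1.
  rewrite E2 E2' !det_mx22 u1 expr1n mul1r rr in hdet.
  move/addrI/oppr_inj: hdet => hd.
  have dd : d' = d.
    apply: (zp_mulfI pP (pX_neq0 pP r)); apply: (zp_mulfI pP (pX_neq0 pP r)).
    transitivity (P ^+ r * d' * P ^+ r); first ring.
    by rewrite hd; ring.
  by rewrite E2 E2' rr dd.
- by exfalso; apply: (sc A0 A0' (K2s _ _ _ hr0 E2) _ hs); rewrite E3' mxE.
- by exfalso; apply: (sc A0 A0' (K2s _ _ _ hr0 E2) _ hs); rewrite E4' mxE.
- by exfalso; apply: (sc A0' A0 (K1s _ E1') _ (ms_sym hs)); rewrite E3 mxE.
- by exfalso; apply: (sc A0' A0 (K2s _ _ _ hr' E2') _ (ms_sym hs)); rewrite E3 mxE.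
- rewrite E3 E3' !tr_mx22 !add0r in htr.
  have rr : r' = r.
    by apply: (@pX_unit_eq _ pP r' r 1 u (unitr1 _) hu); rewrite mulr1 htr mulrC.
  have u1 : u = 1.
    by apply: (zp_mulfI pP (pX_neq0 pP r)); rewrite mulr1 mulrC -htr rr.
  rewrite E3 E3' !det_mx22 u1 expr1n !mul0r !sub0r !mulr1 mul1r in hdet.
  by rewrite E3 E3' rr (oppr_inj hdet).
- exfalso; rewrite E3 E4' !tr_mx22 !add0r in htr.
  case: (zp_mul_eq0 pP (esym htr)) => /eqP.
    by rewrite (negbTE (unit_neq0 hu)).
  by rewrite (negbTE (pX_neq0 pP r)).
- by exfalso; apply: (sc A0' A0 (K1s _ E1') _ (ms_sym hs)); rewrite E4 mxE.
- by exfalso; apply: (sc A0' A0 (K2s _ _ _ hr' E2') _ (ms_sym hs)); rewrite E4 mxE.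
- exfalso; rewrite E4 E3' !tr_mx22 !add0r mulr0 in htr.
  by move/eqP: htr; rewrite (negbTE (pX_neq0 pP r')).
- rewrite E4 E4' !det_mx22 !mul0r !sub0r !mulr1 mulrN in hdet.
  move/oppr_inj: hdet => hd.
  have hu2 : u ^+ 2 \is a GRing.unit by rewrite unitrX.
  have hue : u ^+ 2 * e \is a GRing.unit.
    by rewrite unitrM hu2; case: (he) => ->; rewrite ?unitr1.
  have he'u : e' \is a GRing.unit by case: (he') => ->; rewrite ?unitr1.
  have rr : r' = r.
    apply: (@pX_unit_eq _ pP r' r e' (u ^+ 2 * e) he'u hue).
    by rewrite mulrC hd; ring.
  rewrite rr in hd.
  have ee : e' = u ^+ 2 * e.
    by apply: (zp_mulfI pP (pX_neq0 pP r)); rewrite [LHS]mulrC hd; ring.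
  case: he => eE; case: he' => e'E.
  + by rewrite E4 E4' rr eE e'E.
  + exfalso; apply: hns; exists u, 0.
    by rewrite mulr0 addr0 -e'E ee eE mulr1.
  + exfalso; apply: hns; exists u^-1, 0; rewrite mulr0 addr0.
    have h1 : u ^+ 2 * rho = 1 by rewrite -eE -ee e'E.
    by rewrite exprVn -[rho](mulKr hu2) h1 mulr1.
  + by rewrite E4 E4' rr eE e'E.
Qed.

Lemma uniq_core (rho : Z) (hns : nonsquare_mod_p rho) (hr : rho \is a GRing.unit)
  (M1 M2 : M) :
  (exists s (A0 : M), core_matrix rho A0 /\ M1 = P ^+ s *: A0) ->
  (exists s (A0 : M), core_matrix rho A0 /\ M2 = P ^+ s *: A0) ->
  mult_similar M1 M2 -> M1 = M2.
Proof.
move=> [s [A0 [h0 E1]]] [t [A0' [h0' E2]]] hs; rewrite E1 E2 in hs *.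
have h1 := ms_content_le hs (core_prim hr h0').
have h2 := ms_content_le (ms_sym hs) (core_prim hr h0).
have st : s = t by apply/eqP; rewrite eqn_leq h1 h2.
rewrite -st in hs *.
by rewrite (core_uniq hns hr h0 h0' (ms_cancel pP hs)).
Qed.

End UN.

Theorem mainTheorem19 (p : nat) (p_prime : prime p) (p_odd : odd p)
    (rho : 'Z_[p]) (rho_unit : rho \is a GRing.unit)
    (rho_nsq : nonsquare_mod_p rho) :
  (forall A : 'M['Z_[p]]_2, mx_nilpotent A ->
     exists! M : 'M['Z_[p]]_2,
       (M = 0 \/ exists s : nat, M = (p%:R ^+ s) *: mx22 0 0 1 0)
       /\ mult_similar A M)
  /\
  (forall A : 'M['Z_[p]]_2, ~ mx_nilpotent A ->
     exists! M : 'M['Z_[p]]_2,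
       (exists (s : nat) (A0 : 'M['Z_[p]]_2),
          core_matrix rho A0 /\ M = (p%:R ^+ s) *: A0)
       /\ mult_similar A M).
Proof.
split.
- move=> A hA; have [M0 [hf hms]] := exist_nil p_prime p_odd hA.
  exists M0; split; first by split.
  move=> M' [hf' hms']; apply: (uniq_nil p_prime p_odd hf hf').
  exact: (ms_trans (ms_sym hms) hms').
- move=> A hA; have [M0 [hf hms]] := exist_nonnil p_prime p_odd rho_nsq rho_unit hA.
  exists M0; split; first by split.
  move=> M' [hf' hms']; apply: (uniq_core p_prime p_odd rho_nsq rho_unit hf hf').
  exact: (ms_trans (ms_sym hms) hms').
Qed.
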